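(* For every $M\in\mathrm{Mat}_3(\mathbb C)$, $M^{\otimes d}=M\otimes M\otimes\cdots\otimes M\in\mathcal T$ (under the identification $\mathrm{Mat}_X(\mathbb C)=\mathrm{Mat}_3(\mathbb C)^{\otimes d}$ below).
   Context: Let $d\ge1$, $\mathbb F_3=\{0,1,2\}$ and $X=\mathbb F_3^d$. The Hamming digraph $H^*(d,3)$ has vertex set $X$, with an arc from $y$ to $z$ iff $y$ and $z$ differ in exactly one coordinate $i$ and $z_i=y_i+1$ in $\mathbb F_3$. Let $V=\mathbb C^X$ with basis $\{\hat y\}$. The adjacency matrix $A\in\mathrm{Mat}_X(\mathbb C)$ has $(y,z)$-entry $1$ iff there is an arc from $y$ to $z$. For integers $s,t$, $E^*_{[s,t]}$ is the diagonal matrix whose $(y,y)$-entry is $1$ if $y$ has exactly $s$ ones and $t$ twos, and $0$ otherwise. The Terwilliger algebra $\mathcal T$ is the subalgebra of $\mathrm{Mat}_X(\mathbb C)$ generated by $A$, $A^\top$ and all $E^*_{[s,t]}$. With $e_0,e_1,e_2$ the standard basis of $\mathbb C^3$, identify $V$ with $(\mathbb C^3)^{\otimes d}$ via $\hat y\mapsto e_{y_1}\otimes\cdots\otimes e_{y_d}$, and hence $\mathrm{Mat}_X(\mathbb C)$ with $\mathrm{Mat}_3(\mathbb C)^{\otimes d}$. *)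

(* Defs.v *)
From HB Require Import structures.
From mathcomp Require Import all_boot all_order all_algebra.
From mathcomp Require Import reals complex.
Set Implicit Arguments. Unset Strict Implicit. Unset Printing Implicit Defensive.
Import Order.TTheory GRing.Theory Num.Theory.
Local Open Scope ring_scope.

(* Vertex set X = F_3^d, elements y : 'I_d -> {0,1,2}. *)
Definition vtx (d : nat) := {ffun 'I_d -> 'I_3}.

Definition arc (d : nat) (y z : vtx d) : bool :=
  [exists i : 'I_d, (nat_of_ord (z i) == (y i + 1) %% 3)%N
                    && [forall j : 'I_d, (j != i) ==> (z j == y j)]].

Definition nones (d : nat) (y : vtx d) : nat := #|[set i : 'I_d | nat_of_ord (y i) == 1%N]|.
Definition ntwos (d : nat) (y : vtx d) : nat := #|[set i : 'I_d | nat_of_ord (y i) == 2%N]|.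

(* Mat_X(C): square matrices indexed (through enum_val) by X. *)
Definition matX (C : Type) (d : nat) := 'M[C]_#|{: vtx d}|.

Definition mxX (C : Type) (d : nat) (f : vtx d -> vtx d -> C) : matX C d :=
  \matrix_(i, j) f (enum_val i) (enum_val j).

Section Terwilliger.
Variable C : fieldType.
Variable d : nat.

Definition adjA : matX C d := mxX (fun y z => (arc y z)%:R).

Definition Estar (s t : nat) : matX C d :=
  mxX (fun y z => ((y == z) && (nones y == s) && (ntwos y == t))%:R).

Inductive inT : matX C d -> Prop :=
| inT_A : inT adjA
| inT_At : inT adjA^T
| inT_E s t : inT (Estar s t)
| inT_1 : inT 1%:M
| inT_add M N : inT M -> inT N -> inT (M + N)
| inT_scale (c : C) M : inT M -> inT (c *: M)
| inT_mul M N : inT M -> inT N -> inT (M *m N).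

(* M^{(x) d} under V = (C^3)^{(x) d}, y_hat |-> e_{y_1} (x) ... (x) e_{y_d}. *)
Definition tensor_pow (M : 'M[C]_3) : matX C d :=
  mxX (fun y z => \prod_(i < d) M (y i) (z i)).
End Terwilliger.

(* Main.v *)
Require Import Defs.
From HB Require Import structures.
From mathcomp Require Import all_boot all_order all_algebra.
From mathcomp Require Import reals complex.
Set Implicit Arguments. Unset Strict Implicit. Unset Printing Implicit Defensive.
Import Order.TTheory GRing.Theory Num.Theory.
Local Open Scope ring_scope.

Section Gen.
Variable C : fieldType.
Variable d : nat.

Notation V := (vtx d).
Notation MX := (matX C d).

Lemma mxXE (f : V -> V -> C) i j : mxX f i j = f (enum_val i) (enum_val j).
Proof. by rewrite /mxX mxE. Qed.

Lemma mxX_mul (f g : V -> V -> C) :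
  mxX f *m mxX g = mxX (fun y z => \sum_w f y w * g w z).
Proof.
apply/matrixP => i j; rewrite !mxE.
rewrite [RHS](reindex (@enum_val V predT)) /=; last by exists enum_rank => k _; [exact: enum_valK | exact: enum_rankK].
by apply: eq_bigr => k _; rewrite !mxE.
Qed.

Lemma mxX_ext (f g : V -> V -> C) : (forall y z, f y z = g y z) -> mxX f = mxX g.
Proof. by move=> H; apply/matrixP => i j; rewrite !mxE H. Qed.

Lemma mxX_tr (f : V -> V -> C) : (mxX f)^T = mxX (fun y z => f z y).
Proof. by apply/matrixP => i j; rewrite !mxE. Qed.

Lemma mxX_add (f g : V -> V -> C) : mxX f + mxX g = mxX (fun y z => f y z + g y z).
Proof. by apply/matrixP => i j; rewrite !mxE. Qed.

Lemma mxX_scale c (f : V -> V -> C) : c *: mxX f = mxX (fun y z => c * f y z).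
Proof. by apply/matrixP => i j; rewrite !mxE. Qed.

Lemma mxX_sum (I : finType) (F : I -> V -> V -> C) :
  \sum_k mxX (F k) = mxX (fun y z => \sum_k F k y z).
Proof. by apply/matrixP => i j; rewrite !mxE summxE; apply: eq_bigr => k _; rewrite mxE. Qed.

Lemma mxX_one : (1%:M : MX) = mxX (fun y z => (y == z)%:R).
Proof. by apply/matrixP => i j; rewrite !mxE (inj_eq enum_val_inj). Qed.

Definition Q (g : 'I_d -> 'M[C]_3) : MX :=
  mxX (fun y z => \prod_(i < d) g i (y i) (z i)).

Lemma Q_mul g h : Q g *m Q h = Q (fun i => g i *m h i).
Proof.
rewrite /Q mxX_mul; apply: mxX_ext => y z.
under eq_bigr do rewrite -big_split /=.
rewrite -(bigA_distr_bigA (fun i c => g i (y i) c * h i c (z i))).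
by apply: eq_bigr => i _; rewrite mxE.
Qed.

Lemma Q_ext g h : (forall i, g i = h i) -> Q g = Q h.
Proof. by move=> H; apply: mxX_ext => y z; apply: eq_bigr => i _; rewrite H. Qed.

Lemma Q_tr g : (Q g)^T = Q (fun i => (g i)^T).
Proof. by rewrite mxX_tr; apply: mxX_ext => y z; apply: eq_bigr => i _; rewrite mxE. Qed.

Lemma Q_one : Q (fun _ => 1%:M) = 1%:M.
Proof.
rewrite mxX_one; apply: mxX_ext => y z; case: eqP => [->|/eqP nyz].
  by apply: big1 => i _; rewrite mxE eqxx.
have [i Hi] : exists i, y i != z i.
  by apply/existsP; apply: contraNT nyz => /existsPn H; apply/eqP/ffunP => i; apply/eqP; move: (H i); rewrite negbK.
by rewrite (bigD1 i) //= mxE (negbTE Hi) mul0r.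
Qed.


Definition slot i (N : 'M[C]_3) := Q (fun j => if j == i then N else 1%:M).

Lemma slotE i N : slot i N =
  mxX (fun y z => N (y i) (z i) * \prod_(j | j != i) ((y j == z j)%:R : C)).
Proof.
apply: mxX_ext => y z; rewrite (bigD1 i) //= eqxx; congr (_ * _).
by apply: eq_bigr => j /negbTE ->; rewrite mxE.
Qed.

Lemma slot_lin i c N N' : slot i (c *: N + N') = c *: slot i N + slot i N'.
Proof.
rewrite !slotE mxX_scale mxX_add; apply: mxX_ext => y z.
by rewrite !mxE mulrDl mulrA.
Qed.

Lemma slot_sub i N N' : slot i (N - N') = slot i N - slot i N'.
Proof.
rewrite !slotE; apply/matrixP => a b; rewrite !mxE.
by rewrite mulrBl.
Qed.

Lemma slot0 i : slot i 0 = 0.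
Proof. by rewrite slotE; apply/matrixP => a b; rewrite !mxE mul0r. Qed.

Definition D N : MX := \sum_(i < d) slot i N.

Lemma D_lin c N N' : D (c *: N + N') = c *: D N + D N'.
Proof. by rewrite /D scaler_sumr -big_split; apply: eq_bigr => i _; rewrite slot_lin. Qed.

Lemma D0 : D 0 = 0.
Proof. by rewrite /D big1 // => i _; rewrite slot0. Qed.

Lemma slot_comm i i' N N' : i != i' -> slot i N *m slot i' N' = slot i' N' *m slot i N.
Proof.
move=> nii; rewrite !Q_mul; apply: Q_ext => j.
case: (eqVneq j i) => [->|nji]; first by rewrite (negbTE nii) mulmx1 mul1mx.
by case: (j == i'); rewrite ?mulmx1 ?mul1mx.
Qed.

Lemma slot_mul i N N' : slot i N *m slot i N' = slot i (N *m N').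
Proof. by rewrite Q_mul; apply: Q_ext => j; case: (j == i); rewrite ?mulmx1. Qed.

Lemma D_comm N N' : D N *m D N' - D N' *m D N = D (N *m N' - N' *m N).
Proof.
rewrite /D !mulmx_suml.
under eq_bigr => i _ do rewrite mulmx_sumr.
under [X in _ - X]eq_bigr => i _ do rewrite mulmx_sumr.
rewrite [X in _ - X]exchange_big /= -sumrB; apply: eq_bigr => i _.
rewrite -sumrB (bigD1 i) //= big1 ?addr0.
  by rewrite !slot_mul slot_sub.
by move=> j nji; rewrite slot_comm 1?eq_sym // subrr.
Qed.


Lemma prod_eqR (y z : V) i :
  \prod_(j | j != i) ((y j == z j)%:R : C) = ([forall j, (j != i) ==> (y j == z j)])%:R.
Proof.
case: forallP => [H|H].
  by apply: big1 => j nji; move: (H j); rewrite nji /= => ->.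
have /existsP [j Hj] : [exists j, ~~ ((j != i) ==> (y j == z j))].
  by rewrite -negb_forall; apply/negP => /forallP K; exact: H K.
move: Hj; rewrite negb_imply => /andP [nji /negbTE nyz].
by rewrite (bigD1 j) //= nyz mul0r.
Qed.

Lemma DE N : D N = mxX (fun y z => \sum_i N (y i) (z i) *
    ([forall j, (j != i) ==> (y j == z j)])%:R).
Proof.
rewrite /D; under eq_bigr do rewrite slotE.
by rewrite mxX_sum; apply: mxX_ext => y z; apply: eq_bigr => i _; rewrite prod_eqR.
Qed.

Lemma forall_eq (y z : V) i : y i = z i -> [forall j, (j != i) ==> (y j == z j)] -> y = z.
Proof.
move=> Hi /forallP H; apply/ffunP => j; case: (eqVneq j i) => [->//|nji].
by move: (H j); rewrite nji => /eqP.
Qed.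

Lemma forall_sym (y z : V) i :
  [forall j, (j != i) ==> (y j == z j)] = [forall j, (j != i) ==> (z j == y j)].
Proof. by apply: eq_forallb => j; rewrite [y j == _]eq_sym. Qed.

Definition aS : 'M[C]_3 := \matrix_(u, v) ((nat_of_ord v == (u + 1) %% 3)%N)%:R.

Lemma adjA_D : adjA C d = D aS.
Proof.
rewrite DE /adjA; apply: mxX_ext => y z.
under eq_bigr do rewrite mxE -natrM mulnb forall_sym.
case: (boolP (Defs.arc y z)) => [/existsP [i0 Hi0]|H].
  rewrite (bigD1 i0) //= Hi0 big1 ?addr0 // => i ni.
  case: (boolP (_ && _)) => // /andP [Hi /forallP Hf]; exfalso.
  move: Hi0 => /andP [Hz _]; move: (Hf i0); rewrite eq_sym ni /=.
  move/eqP => E; move: Hz; rewrite E; by case: (y i0) => [[|[|[|m]]] Hm].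
by rewrite big1 // => i _; case: (boolP (_ && _)) => // K; case/negP: H; apply/existsP; exists i.
Qed.

Lemma adjAt_D : (adjA C d)^T = D aS^T.
Proof.
rewrite adjA_D /D raddf_sum.
by apply: eq_bigr => i _; rewrite /= /slot Q_tr; apply: Q_ext => j; case: (j == i); rewrite ?trmx1.
Qed.


Lemma card_le_d (P : pred 'I_d) : (#|[set i | P i]| < d.+1)%N.
Proof. by rewrite ltnS; apply: leq_trans (max_card _) _; rewrite card_ord. Qed.

Lemma sum_pick (n a : nat) (G : 'I_n -> C) (ha : (a < n)%N) :
  \sum_(s < n) (a == s)%:R * G s = G (Ordinal ha).
Proof.
rewrite (bigD1 (Ordinal ha)) //= eqxx mul1r big1 ?addr0 // => s ns.
case: eqP => [E|]; last by rewrite mul0r.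
by case/eqP: ns; apply: val_inj; rewrite /= E.
Qed.

Lemma sEst (F : nat -> nat -> C) :
  \sum_(s < d.+1) \sum_(t < d.+1) F s t *: Estar C d s t =
  mxX (fun y z => (y == z)%:R * F (nones y) (ntwos y)).
Proof.
rewrite /Estar.
under eq_bigr do under eq_bigr do rewrite mxX_scale.
under eq_bigr do rewrite mxX_sum.
rewrite mxX_sum; apply: mxX_ext => y z.
case: (eqVneq y z) => [E|nyz]; last first.
  by rewrite mul0r big1 // => s _; rewrite big1 // => t _; rewrite mulr0.
rewrite mul1r.
under eq_bigr do under eq_bigr do rewrite /= -mulnb natrM mulrA [F _ _ * _]mulrC -mulrA.
under eq_bigr do rewrite -mulr_sumr.
have h1 : (nones y < d.+1)%N := card_le_d _.
have h2 : (ntwos y < d.+1)%N := card_le_d _.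
rewrite (sum_pick _ h1) /=.
under eq_bigr do rewrite mulrC.
by rewrite (sum_pick _ h2).
Qed.


Lemma sum_bool_card (b : pred 'I_d) : \sum_i ((b i)%:R : C) = (#|[set i | b i]|)%:R.
Proof.
rewrite -natr_sum -sum1dep_card big_mkcond /=; congr (_%:R); rewrite [RHS]big_mkcond /=.
by apply: eq_bigr => i _; case: (b i).
Qed.

Lemma D_diag (k : 'I_3) : D (delta_mx k k) =
  mxX (fun y z => (y == z)%:R * (#|[set i | y i == k]|)%:R).
Proof.
rewrite DE; apply: mxX_ext => y z.
case: (eqVneq y z) => [<-|nyz].
  rewrite mul1r -sum_bool_card; apply: eq_bigr => i _; rewrite mxE.
  have -> : [forall j, (j != i) ==> (y j == y j)] by apply/forallP => j; rewrite eqxx implybT.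
  by rewrite mulr1 andbb.
rewrite mul0r big1 // => i _; rewrite mxE.
case: (boolP [forall j, _]) => [H|]; last by rewrite mulr0.
case: (boolP ((y i == k) && (z i == k))) => [/andP [/eqP a /eqP b]|]; last by rewrite mul0r.
by case/eqP: nyz; apply: (forall_eq (i := i)) => //; rewrite a b.
Qed.


Definition cm (X Y : 'M[C]_3) := X *m Y - Y *m X.
Definition o0 : 'I_3 := @Ordinal 3 0 isT.
Definition o1 : 'I_3 := @Ordinal 3 1 isT.
Definition o2 : 'I_3 := @Ordinal 3 2 isT.

Lemma cmE k (Y : 'M[C]_3) u v :
  cm (delta_mx k k) Y u v = ((u == k)%:R - (v == k)%:R) * Y u v.
Proof.
rewrite /cm !mxE mulrBl; congr (_ - _).
  rewrite (bigD1 k) //= big1 ?addr0 => [|j njk]; rewrite mxE; last by rewrite (negbTE njk) andbF mul0r.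
  by case: (eqVneq u k) => [->|nuk]; rewrite ?eqxx ?mul0r.
rewrite (bigD1 k) //= big1 ?addr0 => [|j njk]; rewrite mxE; last by rewrite (negbTE njk) mulr0.
by case: (eqVneq v k) => [->|nvk]; rewrite ?eqxx ?mulr0 ?mulr1 ?mul1r ?mul0r // mulrC.
Qed.

Ltac mxcomp := apply/matrixP; case => [[|[|[|?]]] ?] //; case => [[|[|[|?]]] ?] //;
  rewrite ?cmE !mxE /=;
  rewrite ?(mul0r,mulr0,mul1r,mulr1,addr0,add0r,subr0,sub0r,oppr0,opprK,subrr,mulrN,mulNr).
Lemma id01 : cm (delta_mx o1 o1) (cm (delta_mx o0 o0) aS) = - delta_mx o0 o1.
Proof. by mxcomp. Qed.
Lemma idx0 : cm (delta_mx o2 o2) (cm (delta_mx o1 o1) aS) = - delta_mx o1 o2.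
Proof. by mxcomp. Qed.
Lemma idx1 : cm (delta_mx o0 o0) (cm (delta_mx o2 o2) aS) = - delta_mx o2 o0.
Proof. by mxcomp. Qed.
Lemma idx2 : cm (delta_mx o1 o1) (cm (delta_mx o0 o0) aS^T) = - delta_mx o1 o0.
Proof. by mxcomp. Qed.
Lemma idx3 : cm (delta_mx o2 o2) (cm (delta_mx o1 o1) aS^T) = - delta_mx o2 o1.
Proof. by mxcomp. Qed.
Lemma idx4 : cm (delta_mx o0 o0) (cm (delta_mx o2 o2) aS^T) = - delta_mx o0 o2.
Proof. by mxcomp. Qed.
Lemma id00 : delta_mx o0 o0 = 1%:M - delta_mx o1 o1 - delta_mx o2 o2 :> 'M[C]_3.
Proof. by mxcomp. Qed.

Lemma inT_sub M N : inT M -> inT N -> inT (M - N :> MX).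
Proof. by move=> hM hN; rewrite -scaleN1r; apply: inT_add => //; apply: inT_scale. Qed.

Lemma inT_0 : inT (0 : MX).
Proof. by rewrite -(scale0r (1%:M : MX)); apply: inT_scale; apply: inT_1. Qed.

Lemma inT_sum (I : finType) (P : pred I) (F : I -> MX) :
  (forall i, P i -> inT (F i)) -> inT (\sum_(i | P i) F i).
Proof. by move=> H; apply: big_ind => //; [exact: inT_0 | exact: inT_add]. Qed.

Definition L N := inT (D N).

Lemma L_scale c N : L N -> L (c *: N).
Proof. by rewrite /L -[c *: N]addr0 D_lin D0 addr0 => h; apply: inT_scale. Qed.

Lemma L_add N N' : L N -> L N' -> L (N + N').
Proof.
have E : D (N + N') = D N + D N' by rewrite -{1}[N]scale1r D_lin scale1r.
by rewrite /L E => h h'; apply: inT_add.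
Qed.

Lemma L_0 : L 0.
Proof. by rewrite /L D0; exact: inT_0. Qed.

Lemma L_sum (I : finType) (F : I -> 'M[C]_3) : (forall i, L (F i)) -> L (\sum_i F i).
Proof. by move=> H; apply: big_ind => //; [exact: L_0 | exact: L_add]. Qed.

Lemma L_cm N N' : L N -> L N' -> L (cm N N').
Proof. by rewrite /L /cm -D_comm => h h'; apply: inT_sub; apply: inT_mul. Qed.

Lemma L_one : L 1%:M.
Proof.
rewrite /L.
have -> : D 1%:M = d%:R *: (1%:M : MX).
  rewrite /D (eq_bigr (fun _ => 1%:M)) ?sumr_const ?card_ord ?scaler_nat // => i _.
  by rewrite /slot -Q_one; apply: Q_ext => j; case: (j == i).
by apply: inT_scale; apply: inT_1.
Qed.

Lemma L_E (k : 'I_3) (F : nat -> nat -> C) :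
  (forall y : V, F (nones y) (ntwos y) = (#|[set i | y i == k]|)%:R) -> L (delta_mx k k).
Proof.
move=> HF; rewrite /L D_diag.
have -> : mxX (fun y z : V => (y == z)%:R * #|[set i | y i == k]|%:R) =
    \sum_(s < d.+1) \sum_(t < d.+1) F s t *: Estar C d s t.
  by rewrite sEst; apply: mxX_ext => y z; rewrite HF.
by apply: inT_sum => s _; apply: inT_sum => t _; apply: inT_scale; apply: inT_E.
Qed.

Lemma L_all N : L N.
Proof.
have La : L aS by rewrite /L -adjA_D; exact: inT_A.
have Lat : L aS^T by rewrite /L -adjAt_D; exact: inT_At.
have L11 : L (delta_mx o1 o1).
  by apply: (L_E (F := fun s t => s%:R)) => y; congr (_%:R); apply: eq_card => i; rewrite !inE.
have L22 : L (delta_mx o2 o2).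
  by apply: (L_E (F := fun s t => t%:R)) => y; congr (_%:R); apply: eq_card => i; rewrite !inE.
have E3' : forall u : 'I_3, u = o0 \/ u = o1 \/ u = o2.
  by case=> [[|[|[|m]]] Hm]; [left|right;left|right;right|by []]; apply: val_inj.
have L00 : L (delta_mx o0 o0).
  rewrite id00 -!scaleN1r; apply: L_add; [apply: L_add; [exact: L_one|] |]; exact: L_scale.
have L_E' : forall k, L (delta_mx k k).
  by move=> k; case: (E3' k) => [->|[->|->]].
have Lneg X : L (- X) -> L X by move=> h; rewrite -[X]opprK -scaleN1r; exact: L_scale.
have E3 : forall u : 'I_3, u = o0 \/ u = o1 \/ u = o2.
  by case=> [[|[|[|m]]] Hm]; [left|right;left|right;right|by []]; apply: val_inj.
have Lc k l X : L X -> L (cm (delta_mx k k) (cm (delta_mx l l) X)).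
  by move=> h; apply: L_cm; [apply: L_E'|apply: L_cm => //; apply: L_E'].
have Ld : forall u v, L (delta_mx u v).
  move=> u v; case: (E3 u) => [->|[->|->]]; case: (E3 v) => [->|[->|->]] => //.
  - by apply: Lneg; rewrite -id01; exact: Lc.
  - by apply: Lneg; rewrite -idx4; exact: Lc.
  - by apply: Lneg; rewrite -idx2; exact: Lc.
  - by apply: Lneg; rewrite -idx0; exact: Lc.
  - by apply: Lneg; rewrite -idx1; exact: Lc.
  - by apply: Lneg; rewrite -idx3; exact: Lc.
rewrite (matrix_sum_delta N); apply: L_sum => u; apply: L_sum => v; exact: L_scale.
Qed.


Section Newton.
Variable N : 'M[C]_3.

Definition gS (S : {set 'I_d}) := fun j => if j \in S then N else 1%:M.
Definition e k := \sum_(S : {set 'I_d} | #|S| == k) Q (gS S).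
Definition tt S i j := Q (fun l => if l == i then N ^+ j else gS S l).
Definition G k j := \sum_(S : {set 'I_d} | #|S| == k) \sum_(i | i \notin S) tt S i j.
Definition p j := D (N ^+ j).

Lemma prod_e k j : e k *m p j =
  G k j + \sum_(S : {set 'I_d} | #|S| == k) \sum_(i | i \in S) tt (S :\ i) i j.+1.
Proof.
rewrite /e /p /D /G mulmx_suml -big_split /=; apply: eq_bigr => S _.
rewrite mulmx_sumr (bigID (fun i => i \in S)) /= addrC; congr (_ + _).
  apply: eq_bigr => i niS; rewrite /slot Q_mul; apply: Q_ext => l.
  case: (eqVneq l i) => [->|nli]; last by rewrite mulmx1.
  by rewrite /gS (negbTE niS) mul1mx.
apply: eq_bigr => i iS; rewrite /slot Q_mul; apply: Q_ext => l.
case: (eqVneq l i) => [->|nli]; first by rewrite /gS iS exprS mulmxE.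
by rewrite mulmx1 /gS in_setD1 nli.
Qed.

Definition flip (i : 'I_d) (S : {set 'I_d}) := if i \in S then S :\ i else i |: S.

Lemma flipK i : involutive (flip i).
Proof.
move=> S; rewrite /flip; case: (boolP (i \in S)) => iS.
  by rewrite !inE eqxx /= setD1K.
by rewrite setU11 setU1K.
Qed.

Lemma reidx (F : {set 'I_d} -> 'I_d -> MX) k :
  \sum_(S : {set 'I_d} | #|S| == k.+1) \sum_(i | i \in S) F (S :\ i) i =
  \sum_(S : {set 'I_d} | #|S| == k) \sum_(i | i \notin S) F S i.
Proof.
rewrite (exchange_big_dep xpredT) //= [RHS](exchange_big_dep xpredT) //=.
apply: eq_bigr => i _.
rewrite (reindex_inj (inv_inj (flipK i))) /=.
apply: eq_big => S; rewrite /flip; case: (boolP (i \in S)) => iS.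
- by rewrite !inE eqxx /= !andbF.
- by rewrite setU11 cardsU1 iS andbT.
- by rewrite !inE eqxx /= !andbF.
- by move=> _; rewrite setU1K.
Qed.

Lemma G_e k : G k 1 = k.+1%:R *: e k.+1.
Proof.
rewrite /G -(reidx (fun S i => tt S i 1)) /e scaler_sumr; apply: eq_bigr => S /eqP cS.
have -> : \sum_(i | i \in S) tt (S :\ i) i 1 = \sum_(i in S) Q (gS S).
  apply: eq_bigr => i iS; apply: Q_ext => l; case: (eqVneq l i) => [->|nli].
    by rewrite expr1 /gS iS.
  by rewrite /gS in_setD1 nli.
by rewrite sumr_const cS scaler_nat.
Qed.

Lemma sum_card0 (F : {set 'I_d} -> MX) : \sum_(S : {set 'I_d} | #|S| == 0%N) F S = F set0.
Proof. by apply: big_pred1 => S; rewrite /= cards_eq0. Qed.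

Hypothesis Cchar : forall n, n.+1%:R != 0 :> C.

Lemma newton k : (forall j, inT (G k j)) /\ inT (e k).
Proof.
have Hp j : inT (p j) by exact: L_all.
elim: k => [|k [IG Ie]].
  have He : inT (e 0).
    rewrite /e sum_card0.
    have -> : Q (gS set0) = 1%:M by rewrite -Q_one; apply: Q_ext => l; rewrite /gS in_set0.
    exact: inT_1.
  split => // j.
  have -> : G 0 j = e 0 *m p j by rewrite prod_e sum_card0 big_pred0 ?addr0 // => i; rewrite in_set0.
  exact: inT_mul.
have He : inT (e k.+1).
  have -> : e k.+1 = (k.+1%:R)^-1 *: G k 1 by rewrite G_e scalerA mulVf ?scale1r.
  by apply: inT_scale.
split => // j.
have -> : G k.+1 j = e k.+1 *m p j - G k j.+1 by rewrite prod_e (reidx (fun S i => tt S i j.+1)) addrK.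
by apply: inT_sub => //; apply: inT_mul.
Qed.

Lemma tensor_in : inT (tensor_pow d N).
Proof.
have [_ H] := newton d.
have -> : tensor_pow d N = e d.
  rewrite /e (big_pred1 setT) => [|S].
    by apply: Q_ext => l; rewrite /gS in_setT.
  rewrite /= eqEcard subsetT cardsT card_ord /= eqn_leq.
  have -> // : (#|S| <= d)%N by apply: leq_trans (max_card _) _; rewrite card_ord.
exact: H.
Qed.

End Newton.

End Gen.

Theorem lemma5p5 (R : realType) (d : nat) (hd : (0 < d)%N) (M : 'M[R[i]]_3) :
  inT (tensor_pow d M).
Proof. by apply: tensor_in => n; rewrite pnatr_eq0. Qed.
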